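(* Let $\delta\in(0,1)$. The meta-algorithm described in the context, with the commitment subroutine \textsc{CommitUnknown} (parameter $\delta$), guarantees, with probability at least $1-\delta/3$, \[ R(\ell^\star)\le 1+20\ln T\,\ln(T/\delta). \]
   Context: Robust dynamic pricing: there are $T$ rounds and an unknown valuation $v^\star\in[0,1)$. At each round $t$ the seller posts a price $p_t\in[0,1]$. The true sale indicator is $y_t=\mathbbm 1\{p_t\le v^\star\}$; the seller observes $\sigma_t\in\{0,1\}$, which differs from $y_t$ in at most $C$ rounds. The adversary decides whether to corrupt round $t$ based on the history and on the seller's distribution over $p_t$, but not on the realized $p_t$. Meta-algorithm: let $D=\lceil\log_2 T\rceil$. Consider the complete binary tree of intervals of depth $D$ with root $[0,1)$, where each non-leaf node $[L,R)$ has children $[L,M)$ and $[M,R)$, $M=(L+R)/2$; the depth-$D$ nodes are the leaves (each of length at most $1/T$), and $\ell^\star$ is the unique leaf containing $v^\star$. The algorithm keeps a current node $I$, initially the root, and repeats until the horizon ends: if $I=[L,R)$ is not a leaf, it performs a safety check — post $L$ and observe $\sigma_L$, post $R$ and observe $\sigma_R$; the check fails if $\sigma_L=0$ or $\sigma_R=1$ (by convention the query at $L=0$ and the query at $R=1$ always count as passing). On failure $I$ becomes its parent; otherwise it posts $M$, observes $\sigma_M$, and $I$ becomes $[M,R)$ if $\sigma_M=1$ and $[L,M)$ if $\sigma_M=0$. If $I$ is a leaf, the commitment subroutine is run on $I$; if it returns FAIL, $I$ becomes its parent. \textsc{CommitUnknown} with parameter $\delta$: each leaf $\ell$ has a counter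 $s_\ell$, initialized to $0$ at the start of the horizon and never reset. On leaf $\ell=[L,R)$ it repeats the following two-round block: post $L$ and observe $\sigma_L$; if $\sigma_L=0$ return FAIL. Increase $s_\ell$ by $1$ and sample, independently of everything else, $B\sim\mathrm{Bernoulli}(\min\{4\ln(T/\delta)/s_\ell,1\})$. If $B=0$, post $L$ and observe $\sigma_L$, returning FAIL if $\sigma_L=0$; if $B=1$, post $R$ and observe $\sigma_R$, returning FAIL if $\sigma_R=1$. For a leaf $\ell$, $Q(\ell)$ is the set of rounds during which the commitment subroutine runs on $\ell$, and $R(\ell)=\sum_{t\in Q(\ell)}(v^\star-p_t\mathbbm 1\{p_t\le v^\star\})$. *)

(* Defs.v *)
From mathcomp Require Import all_boot all_order all_algebra.
From mathcomp Require Import all_classical all_reals all_analysis.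
Set Implicit Arguments. Unset Strict Implicit. Unset Printing Implicit Defensive.
Import Order.TTheory GRing.Theory Num.Theory.
Local Open Scope ring_scope.

(* PNav      : safety check, about to post L (non-leaf node)
   PSafeR b  : safety check, L already posted; b = "L-query passed"; about to post R
   PSafeM    : safety check passed; about to post M
   PCommit1  : CommitUnknown on a leaf, first round of a block (post L)
   PCommit2  : CommitUnknown on a leaf, second round of a block (randomized) *)
Inductive phase := PNav | PSafeR of bool | PSafeM | PCommit1 | PCommit2.

(* State of the whole interaction.  A node at depth d with index k (k < 2^d)
   is the dyadic interval [k/2^d, (k+1)/2^d). *)
Record pstate (R : Type) := PState {
  nd_d : nat;
  nd_k : nat;
  ph   : phase;
  cnt  : nat -> nat;        (* counters s_l of the leaves, indexed by leaf index; never reset *)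
  hist : seq (R * bool);    (* public history: posted prices and observed signals *)
  used : nat;               (* number of corrupted rounds so far *)
  reg  : R                  (* accumulated regret R on the leaf l-star so far *)
}.

Section Pricing.
Variable R : realType.
Variables (T C : nat) (delta vstar : R).
(* adversary: given the history and the seller's distribution over p_t
   (list of (price, probability)), decides whether to corrupt round t *)
Variable adv : seq (R * bool) -> seq (R * R) -> bool.

Definition Dep : nat := up_log 2 T.

Definition lo (d k : nat) : R := k%:R / 2 ^+ d.
Definition hi (d k : nat) : R := k.+1%:R / 2 ^+ d.
Definition mid (d k : nat) : R := (k.*2.+1)%:R / 2 ^+ d.+1.

Definition is_star_leaf (d k : nat) : bool :=
  (d == Dep) && (lo d k <= vstar) && (vstar < hi d k).

Definition goto (s : pstate R) (d k : nat) : pstate R :=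
  PState d k (if (d < Dep)%N then PNav else PCommit1) (cnt s) (hist s) (used s) (reg s).

Definition goto_parent (s : pstate R) : pstate R := goto s (nd_d s).-1 (nd_k s)./2.

Definition set_phase (s : pstate R) (p : phase) : pstate R :=
  PState (nd_d s) (nd_k s) p (cnt s) (hist s) (used s) (reg s).

(* Bernoulli parameter of CommitUnknown for counter value n *)
Definition qprob (n : nat) : R := Num.min (4 * ln (T%:R / delta) / n%:R) 1.

(* seller's distribution over the price of the current round:
   list of (price, probability, branch tag); tag = B for CommitUnknown *)
Definition dist_of (s : pstate R) : seq (R * R * bool) :=
  let d := nd_d s in let k := nd_k s in
  match ph s with
  | PNav => [:: (lo d k, 1, false)]
  | PSafeR _ => [:: (hi d k, 1, false)]
  | PSafeM => [:: (mid d k, 1, false)]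
  | PCommit1 => [:: (lo d k, 1, false)]
  | PCommit2 => let q := qprob (cnt s k) in [:: (lo d k, 1 - q, false); (hi d k, q, true)]
  end.

Definition trans (s : pstate R) (tag sig : bool) : pstate R :=
  let d := nd_d s in let k := nd_k s in
  match ph s with
  | PNav => set_phase s (PSafeR (sig || (k == 0)%N))       (* L = 0 counts as passing *)
  | PSafeR okL =>
      if okL && (~~ sig || (k.+1 == 2 ^ d)%N)              (* R = 1 counts as passing *)
      then set_phase s PSafeM else goto_parent s
  | PSafeM => if sig then goto s d.+1 k.*2.+1 else goto s d.+1 k.*2
  | PCommit1 =>
      if sig then
        PState d k PCommit2 (fun j => if j == k then (cnt s j).+1 else cnt s j)
               (hist s) (used s) (reg s)
      else goto_parent s
  | PCommit2 => if (if tag then sig else ~~ sig) then goto_parent s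
                else set_phase s PCommit1
  end.

Definition in_commit (p : phase) : bool :=
  match p with PCommit1 | PCommit2 => true | _ => false end.

Definition round (s : pstate R) (p : R) (tag c : bool) : pstate R :=
  let y := p <= vstar in
  let sig := addb y c in
  let r := if in_commit (ph s) && is_star_leaf (nd_d s) (nd_k s)
           then vstar - (if y then p else 0) else 0 in
  trans (PState (nd_d s) (nd_k s) (ph s) (cnt s)
                (rcons (hist s) (p, sig)) (used s + c) (reg s + r)) tag sig.

Definition bound : R := 1 + 20 * ln T%:R * ln (T%:R / delta).

(* probability, over the seller's coins, that after n more rounds from state s
   the accumulated regret on l-star is at most [bound]. The adversary decides corruption
   from the history and the distribution of p_t (not its realization), and is
   cut off once C rounds are corrupted. *)
Fixpoint prob_good (n : nat) (s : pstate R) : R :=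
  match n with
  | 0 => if reg s <= bound then 1 else 0
  | n'.+1 =>
      let dist := dist_of s in
      let c := adv (hist s) [seq (x.1.1, x.1.2) | x <- dist] && (used s < C)%N in
      \sum_(x <- dist) x.1.2 * prob_good n' (round s x.1.1 x.2 c)
  end.

Definition init_state : pstate R :=
  goto (PState 0 0 PNav (fun _ => 0%N) [::] 0%N 0) 0 0.

End Pricing.

(* Main.v *)
Require Import Defs.
From mathcomp Require Import all_boot all_order all_algebra.
From mathcomp Require Import all_classical all_reals all_analysis.
From mathcomp Require Import ring lra.
Import Order.TTheory GRing.Theory Num.Theory.
Local Open Scope ring_scope.

Section Proofs.
Variable R : realType.
Variables (T C : nat) (delta vstar : R).
Variable adv : seq (R * bool) -> seq (R * R) -> bool.
Hypothesis HT : (0 < T)%N.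
Hypothesis Hd : 0 < delta < 1.
Hypothesis Hv : 0 <= vstar < 1.

Local Notation PG := (prob_good T C delta vstar adv).
Local Notation rnd := (round T vstar).
Local Notation dist := (dist_of T delta).
Local Notation q := (qprob T delta).
Local Notation star := (is_star_leaf T vstar).
Local Notation b := (bound T delta).

Lemma L_ge0 : 0 <= ln (T%:R / delta).
Proof.
apply: ln_ge0. case/andP: Hd => d0 d1.
rewrite ler_pdivlMr // mul1r. apply: le_trans (ltW d1) _.
by rewrite ler1n.
Qed.

Lemma q_ge0 n : 0 <= q n.
Proof.
rewrite /qprob le_min ler01 andbT divr_ge0 //.
by rewrite mulr_ge0 // L_ge0.
Qed.

Lemma q_le1 n : q n <= 1.
Proof. by rewrite /qprob ge_min lexx orbT. Qed.

Lemma dist_ok s :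
  (forall x, x \in dist s -> 0 <= x.1.2) /\ \sum_(x <- dist s) x.1.2 = 1.
Proof.
rewrite /dist_of; case: (ph s) => [|bb|||]; split;
  rewrite ?big_cons ?big_nil /= ?addr0 //;
  try (by move=> x; rewrite inE => /eqP -> /=).
- move=> x; rewrite !inE => /orP[] /eqP -> /=.
  + by rewrite subr_ge0 q_le1.
  + exact: q_ge0.
- by rewrite subrK.
Qed.

Lemma super (M : nat -> pstate R -> R) :
  (forall n s, 0 <= M n s) ->
  (forall s, b < reg s -> 1 <= M 0%N s) ->
  (forall n s c, \sum_(x <- dist s) x.1.2 * M n (rnd s x.1.1 x.2 c) <= M n.+1 s) ->
  forall n s, 1 - M n s <= PG n s.
Proof.
move=> M0 Mb Ms; elim=> [|n IH] s /=.
  case: ifP => H; first by rewrite lerBlDr lerDl M0.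
  by rewrite subr_le0 Mb // ltNge H.
set c := (adv _ _ && _).
apply: le_trans (lerB (lexx 1) (Ms n s c)) _.
have [Hp Hs] := dist_ok s.
rewrite -{1}Hs -sumrB big_seq_cond [X in _ <= X]big_seq_cond.
apply: ler_sum => x /andP[xin _].
by rewrite -{1}[x.1.2]mulr1 -mulrBr ler_wpM2l ?Hp ?IH.
Qed.


Definition eps : R := 1 / 2 ^+ Dep T.
Definition pend (s : pstate R) : R :=
  match ph s with
  | PCommit2 => if star (nd_d s) (nd_k s) then 1 + q (cnt s (nd_k s)) else 1
  | _ => 1 end.
Definition Gp (c m : nat) : R := \prod_(0 <= i < m) (1 + q (c + i).+1).

Lemma eps_ge0 : 0 <= eps.
Proof. by rewrite /eps divr_ge0 // exprn_ge0. Qed.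

Lemma pend_ge1 s : 1 <= pend s.
Proof.
rewrite /pend; case: (ph s) => //; case: ifP => // _.
by rewrite lerDl q_ge0.
Qed.

Lemma Gp_ge1 c m : 1 <= Gp c m.
Proof.
rewrite /Gp; elim: m => [|m IH]; first by rewrite big_geq.
rewrite big_nat_recr //= -[X in X <= _]mulr1 ler_pM //.
by rewrite lerDl q_ge0.
Qed.

Lemma Gp_S c m : Gp c m.+1 = (1 + q c.+1) * Gp c.+1 m.
Proof.
rewrite /Gp big_nat_recl // addn0; congr (_ * _).
by apply: eq_bigr => i _; rewrite addnS addSn.
Qed.

Lemma Gp_mono c m : Gp c m <= Gp c m.+1.
Proof.
rewrite /Gp big_nat_recr //= -{1}[X in X <= _]mulr1 ler_pM //.
- by apply: le_trans (Gp_ge1 c m).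
- by rewrite lerDl q_ge0.
Qed.

Lemma Gp_shift c m : Gp c.+1 m <= Gp c m.+1.
Proof.
rewrite Gp_S -{1}[X in X <= _]mul1r ler_pM //.
- by apply: le_trans (Gp_ge1 _ m).
- by rewrite lerDl q_ge0.
Qed.

Variable kstar : nat.
Hypothesis Hk : forall d k, star d k -> k = kstar.

Definition M (n : nat) (s : pstate R) : R :=
  expR ((reg s + n%:R * eps - b) / 2) * (pend s * Gp (cnt s kstar) n).

Lemma M_ge0 n s : 0 <= M n s.
Proof.
rewrite /M mulr_ge0 ?expR_ge0 // mulr_ge0 //.
  by apply: le_trans (pend_ge1 s).
by apply: le_trans (Gp_ge1 _ _).
Qed.

Lemma det_step n s s' :
  reg s' <= reg s + eps ->
  pend s' * Gp (cnt s' kstar) n <= pend s * Gp (cnt s kstar) n.+1 ->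
  M n s' <= M n.+1 s.
Proof.
move=> Hr Hg; rewrite /M ler_pM ?expR_ge0 //.
- rewrite mulr_ge0 //; first by apply: le_trans (pend_ge1 s').
  by apply: le_trans (Gp_ge1 _ _).
- rewrite ler_expR ler_pM2r // -natr1. 
  have := eps_ge0; lra.
Qed.


Lemma goto_pend (s : pstate R) d k : pend (goto T s d k) = 1.
Proof. by rewrite /goto /pend /=; case: ifP. Qed.

Lemma reg_trans (s : pstate R) tag sig : reg (trans T s tag sig) = reg s.
Proof.
rewrite /trans; case: (ph s) => [|ok|||] //=; repeat case: ifP => //.
Qed.

Lemma cnt_trans (s : pstate R) tag sig : ph s <> PCommit1 -> cnt (trans T s tag sig) = cnt s.
Proof.
rewrite /trans; case: (ph s) => [|ok|||] //= _; repeat case: ifP => //.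
Qed.

Lemma pend_trans (s : pstate R) tag sig : ph s <> PCommit1 -> pend (trans T s tag sig) = 1.
Proof.
rewrite /trans; case: (ph s) => [|ok|||] //= _; repeat case: ifP => //;
  rewrite ?goto_pend //.
Qed.

Lemma expR_half : expR (1 / 2) <= 2 :> R.
Proof.
have h1 : 1 - 1/2 <= expR (- (1 / 2)) :> R by exact: expR_ge1Dx.
have h2 : expR (1/2) * expR (- (1/2)) = 1 :> R by rewrite -expRD subrr expR0.
have h3 := expR_gt0 (1/2 : R).
nra.
Qed.

Lemma star_facts d k : star d k ->
  [/\ d = Dep T, lo R d k <= vstar, vstar < hi R d k & hi R d k - lo R d k = eps].
Proof.
rewrite /is_star_leaf => /andP[/andP[/eqP -> H1] H2]; split => //.
by rewrite /hi /lo /eps -mulrBl -natrB // subSnn.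
Qed.


Lemma alg_step (q0 G G' X E1 E2 : R) (st : bool) :
  0 <= q0 -> q0 <= 1 -> 0 <= G -> G <= G' -> 0 <= X ->
  E1 <= X -> E2 <= (if st then 2 else 1) * X ->
  (1 - q0) * (E1 * G) + q0 * (E2 * G) <= X * ((if st then 1 + q0 else 1) * G').
Proof.
move=> q0a q0b G0 GG X0 E1X E2X.
have A : (1 - q0) * (E1 * G) <= (1 - q0) * (X * G).
  by rewrite ler_wpM2l ?subr_ge0 // ler_wpM2r.
have B : q0 * (E2 * G) <= q0 * (((if st then 2 else 1) * X) * G).
  by rewrite ler_wpM2l // ler_wpM2r.
have C1 : X * G <= X * G' by rewrite ler_wpM2l.
have C2 : q0 * (X * G) <= q0 * (X * G') by rewrite ler_wpM2l.
by case: st E2X B => E2X B; lra.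
Qed.

Lemma reg_round (s : pstate R) p tag c : reg (rnd s p tag c) = reg s +
  (if in_commit (ph s) && star (nd_d s) (nd_k s) then vstar - (if p <= vstar then p else 0) else 0).
Proof. by rewrite /round reg_trans. Qed.

Lemma pend_round (s : pstate R) p tag c : ph s <> PCommit1 -> pend (rnd s p tag c) = 1.
Proof. by move=> H; rewrite /round pend_trans. Qed.

Lemma cnt_round (s : pstate R) p tag c : ph s <> PCommit1 -> cnt (rnd s p tag c) = cnt s.
Proof. by move=> H; rewrite /round cnt_trans. Qed.

Lemma Mstep_c2 n d k cn h u rg c :
  (1 - q (cn k)) * M n (rnd (PState d k PCommit2 cn h u rg) (lo R d k) false c) +
  q (cn k) * M n (rnd (PState d k PCommit2 cn h u rg) (hi R d k) true c)
  <= M n.+1 (PState d k PCommit2 cn h u rg).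
Proof.
set s := PState d k PCommit2 cn h u rg.
have Hp : ph s = PCommit2 by [].
rewrite /M !reg_round !pend_round ?Hp // !cnt_round ?Hp //.
rewrite (_ : pend s = if star d k then 1 + q (cn k) else 1) //.
rewrite (_ : reg s = rg) // (_ : cnt s = cn) // (_ : nd_d s = d) // (_ : nd_k s = k) //.
rewrite (_ : in_commit PCommit2 = true) // !andTb.
have hn : n.+1%:R = n%:R + 1 :> R by rewrite natr1.
rewrite !mul1r hn (mulrDl (n%:R) 1 eps) mul1r.
apply: alg_step.
+ exact: q_ge0.
+ exact: q_le1.
+ by apply: le_trans (Gp_ge1 _ _).
+ exact: Gp_mono.
+ exact: expR_ge0.
+ case: ifP => Hs; last by rewrite addr0 ler_expR; have := eps_ge0; lra.
  have [_ H1 H2 H3] := @star_facts _ _ Hs.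
  rewrite H1 ler_expR; lra.
+ case: ifP => Hs; last first.
    by rewrite addr0 mul1r ler_expR; have := eps_ge0; lra.
  have [_ H1 H2 H3] := @star_facts _ _ Hs.
  rewrite (lt_geF H2).
  apply: le_trans (_ : expR ((rg + (n%:R * eps + eps) - b) / 2 + 1/2) <= _).
    by rewrite ler_expR; have := eps_ge0; case/andP: Hv => v0 v1; lra.
  by rewrite expRD mulrC ler_wpM2r ?expR_ge0 // expR_half.
Qed.

Lemma Mstep n s c :
  \sum_(x <- dist s) x.1.2 * M n (rnd s x.1.1 x.2 c) <= M n.+1 s.
Proof.
case: s => d k p cn h u rg; case: p => [|ok|||];
  rewrite /dist_of /= ?big_cons big_nil ?addr0 ?mul1r /=.
- apply: det_step.
    by rewrite /round reg_trans /= addr0 lerDl eps_ge0.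
  by rewrite /round pend_trans // cnt_trans //= !mul1r Gp_mono.
- apply: det_step.
    by rewrite /round reg_trans /= addr0 lerDl eps_ge0.
  by rewrite /round pend_trans // cnt_trans //= !mul1r Gp_mono.
- apply: det_step.
    by rewrite /round reg_trans /= addr0 lerDl eps_ge0.
  by rewrite /round pend_trans // cnt_trans //= !mul1r Gp_mono.
- apply: det_step.
    rewrite /round reg_trans /= lerD2l.
    case: ifP => [Hs|_]; last exact: eps_ge0.
    have [_ H1 H2 H3] := @star_facts _ _ Hs; rewrite H1; lra.
  rewrite /round /trans /=; case: ifP => _; last first.
    by rewrite goto_pend /pend /= !mul1r Gp_mono.
  rewrite /pend /= mul1r; case: ifP => Hs.
    have -> := Hk _ _ Hs; rewrite eqxx Gp_S.
    by rewrite /Gp /=; rewrite lexx.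
  case: eqP => [->|_]; first by rewrite mul1r Gp_shift.
  by rewrite mul1r Gp_mono.
- exact: Mstep_c2.
Qed.

Lemma M_main n s : 1 - M n s <= PG n s.
Proof.
apply: super => //; [exact: M_ge0| |exact: Mstep].
move=> s0 Hs0; rewrite /M /Gp big_geq // mulr1 mul0r addr0.
rewrite -[1]mulr1 ler_pM // ?pend_ge1 //.
by rewrite -expR0 ler_expR divr_ge0 // subr_ge0 ltW.
Qed.


Definition Md (n : nat) (s : pstate R) : R := if reg s + n%:R <= b then 0 else 1.

Lemma dist_price_ge0 s x : x \in dist s -> 0 <= x.1.1.
Proof.
have P0 d k : 0 <= lo R d k /\ 0 <= hi R d k /\ 0 <= mid R d k.
  by rewrite /lo /hi /mid !divr_ge0 ?exprn_ge0.
have [A [B D]] := P0 (nd_d s) (nd_k s).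
rewrite /dist_of; case: (ph s) => [|bb|||]; rewrite ?inE;
  try (by move/eqP => ->).
by case/orP => /eqP ->.
Qed.

Lemma reg_step1 s p tag c : 0 <= p -> reg (rnd s p tag c) <= reg s + 1.
Proof.
move=> p0; rewrite reg_round lerD2l; case/andP: Hv => v0 v1.
case: ifP => _; last by [].
case: ifP => _; lra.
Qed.

Lemma Md_main n s : 1 - Md n s <= PG n s.
Proof.
apply: super.
- by move=> n0 s0; rewrite /Md; case: ifP.
- by move=> s0 H; rewrite /Md addr0 (lt_geF H).
move=> n0 s0 c; have [Hp Hs] := dist_ok s0.
rewrite {2}/Md; case: ifP => H.
  rewrite big1_seq // => x /andP[_ xin]; rewrite /Md ifT ?mulr0 //.
  have := reg_step1 s0 x.1.1 x.2 c (@dist_price_ge0 s0 x xin).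
  move: H; rewrite -natr1; lra.
rewrite -Hs big_seq [X in _ <= X]big_seq; apply: ler_sum => x xin.
by rewrite -[X in _ <= X]mulr1 ler_wpM2l ?Hp // /Md; case: ifP.
Qed.

End Proofs.


Section Numerics.
Variable R : realType.

Lemma ln2_ge : 1 / 2 <= ln (2 : R).
Proof.
have h := @le_ln1Dx R (- (1 / 2)).
have e : 1 + - (1 / 2) = (2 : R)^-1 by field.
rewrite e lnV ?posrE // in h.
have : -1 < - (1 / 2) :> R by lra.
move=> /h; move: (ln _) => l; lra.
Qed.

Lemma harm m : (0 < m)%N ->
  \sum_(0 <= i < m) (i.+1%:R : R)^-1 <= 1 + ln m%:R.
Proof.
elim: m => [//|m IH] _.
case: m IH => [|m] IH.
  by rewrite big_nat1 ln1 addr0 invr1.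
rewrite big_nat_recr //=.
have {}IH := IH isT.
suff K : (m.+2%:R : R)^-1 <= ln m.+2%:R - ln m.+1%:R.
  have L (a b c d : R) : a <= 1 + b -> c <= d - b -> a + c <= 1 + d by lra.
  exact: L IH K.
move: IH; rewrite -!natr1.
set a : R := m%:R + 1.
have a0 : 0 < a by rewrite /a; have := ler0n R m; lra.
move=> IH.
have h := @le_ln1Dx R (- (a + 1)^-1).
have e : 1 + - (a + 1)^-1 = a * (a + 1)^-1.
  by field; apply/lt0r_neq0; lra.
have a1 : 0 < (a + 1)^-1 by rewrite invr_gt0; lra.
rewrite e lnM ?posrE // lnV ?posrE // in h; last lra.
have a2 : (a + 1)^-1 < 1 by rewrite invf_lt1; lra.
have : -1 < - (a + 1)^-1 by lra.
move=> /h; move: (ln a) (ln (a + 1)) => l1 l2; lra.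
Qed.

End Numerics.



Lemma star_uniq (R : realType) T (vstar : R) d k k' :
  is_star_leaf T vstar d k -> is_star_leaf T vstar d k' -> k = k'.
Proof.
move=> /star_facts [-> A1 A2 _] /star_facts [_ B1 B2 _].
move: A1 A2 B1 B2; rewrite /lo /hi.
set P := (2 ^+ Dep T : R)^-1.
have P0 : 0 < P by rewrite invr_gt0 exprn_gt0.
move=> A1 A2 B1 B2.
have lt1 := le_lt_trans A1 B2.
have lt2 := le_lt_trans B1 A2.
move: lt1 lt2; rewrite !(ltr_pM2r P0) !ltr_nat !ltnS => lt1 lt2.
by apply/eqP; rewrite eqn_leq lt1 lt2.
Qed.

Lemma prod_le_exp (R : realType) (F : nat -> R) m : (forall i, 0 <= F i) ->
  \prod_(0 <= i < m) (1 + F i) <= expR (\sum_(0 <= i < m) F i).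
Proof.
move=> F0; elim: m => [|m IH]; first by rewrite !big_geq // expR0.
rewrite !big_nat_recr //= expRD ler_pM //.
- by rewrite big_seq_cond prodr_ge0 // => i _; apply: addr_ge0 => //.
- by rewrite addr_ge0.
- exact: expR_ge1Dx.
Qed.

Lemma Teps (R : realType) T : T%:R * eps R T <= 1.
Proof.
rewrite /eps mul1r ler_pdivrMr ?exprn_gt0 // mul1r.
have := up_logP T (isT : (1 < 2)%N).
by rewrite -(ler_nat R) natrX.
Qed.

Lemma harmL (R : realType) T (delta : R) : (0 < T)%N -> 0 <= ln (T%:R / delta) ->
  \sum_(0 <= i < T) qprob T delta i.+1 <= 4 * ln (T%:R / delta) * (1 + ln (T%:R : R)).
Proof.
move=> HT L0.
apply: le_trans (_ : \sum_(0 <= i < T) (4 * ln (T%:R / delta)) * (i.+1%:R)^-1 <= _).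
  apply: ler_sum => i _; rewrite /qprob ge_min; apply/orP; left.
  by rewrite mulrC.
rewrite -mulr_sumr ler_wpM2l ?mulr_ge0 //.
exact: harm.
Qed.

Theorem lemma5p2 (R : realType) (T C : nat) (delta vstar : R)
    (adv : seq (R * bool) -> seq (R * R) -> bool) :
  (0 < T)%N -> 0 < delta < 1 -> 0 <= vstar < 1 ->
  1 - delta / 3 <= prob_good T C delta vstar adv T (init_state R T).
Proof.
move=> HT Hd Hv.
have [kstar Hk] : exists kstar, forall d k, is_star_leaf T vstar d k -> k = kstar.
  case: (pselect (exists k, is_star_leaf T vstar (Dep T) k)) => [[k0 Hk0]|N].
    exists k0 => d k Hs; have [Ed _ _ _] := @star_facts _ _ _ _ _ Hs.
    by rewrite Ed in Hs; exact: (@star_uniq _ _ _ _ _ _ Hs Hk0).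
  exists 0%N => d k Hs; exfalso; apply: N; exists k.
  by have [Ed _ _ _] := @star_facts _ _ _ _ _ Hs; rewrite -Ed.
have /andP[d0 d1] := Hd.
have T1 : (1 : R) <= T%:R by rewrite ler1n.
have Tpos : (0 : R) < T%:R by rewrite ltr0n.
have x0 : 0 <= ln (T%:R : R) by exact: ln_ge0.
have LE : ln (T%:R / delta) = ln (T%:R : R) - ln delta.
  by rewrite lnM ?posrE ?invr_gt0 // lnV ?posrE.
have Lx : ln (T%:R : R) <= ln (T%:R / delta).
  rewrite LE; have : ln delta <= 0 by apply: ln_le0; lra.
  lra.
move: LE Lx x0; set x := ln (T%:R : R); set L := ln (T%:R / delta) => LE Lx x0.
have init_reg : reg (init_state R T) = 0 by [].
case: (leqP T 3) => HT3.
- apply: le_trans (@Md_main R T C delta vstar adv HT Hd Hv T (init_state R T)).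
  rewrite /Md init_reg add0r ifT; first by lra.
  rewrite /bound -/x -/L.
  case: (ltnP 1 T) => HT2.
    have : ln 2 <= x by rewrite ler_ln ?posrE // (ler_nat R 2 T).
    have := ln2_ge R; have : (T%:R : R) <= 3 by rewrite (ler_nat R T 3).
    nra.
  have T1' : T = 1%N by apply/eqP; rewrite eqn_leq HT2.
  have -> : x = 0 by rewrite /x T1' ln1.
  by rewrite T1' mulr0 mul0r addr0.
- apply: le_trans (@M_main R T C delta vstar adv HT Hd Hv kstar Hk T (init_state R T)).
  suff : M R T delta vstar kstar T (init_state R T) <= delta / 3 by lra.
  rewrite /M init_reg goto_pend mul1r.
  have -> : cnt (init_state R T) kstar = 0%N by [].
  rewrite /Gp add0r.
  have P1 : \prod_(0 <= i < T) (1 + qprob T delta (0 + i).+1) <= expR (4 * L * (1 + x)).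
    apply: le_trans (@prod_le_exp R (fun i => qprob T delta (0 + i).+1) T _) _.
      by move=> i; apply: q_ge0.
    rewrite ler_expR.
    under eq_bigr do rewrite add0n.
    by apply: harmL => //; apply: le_trans Lx.
  have x1 : 1 <= x.
    have h4 : ln (4 : R) <= x by rewrite ler_ln ?posrE // (ler_nat R 4 T).
    have e4 : ln (4 : R) = ln 2 + ln 2 by rewrite -lnM ?posrE //; congr ln; lra.
    have := ln2_ge R; lra.
  have x3 : ln (3 : R) <= x by rewrite ler_ln ?posrE // (ler_nat R 3 T) ltnW.
  have E3 : ln (delta / 3) = ln delta - ln 3 by rewrite lnM ?posrE ?invr_gt0 // lnV ?posrE.
  have TE := Teps R T.
  apply: le_trans (_ : expR ((T%:R * eps R T - bound T delta) / 2) * expR (4 * L * (1 + x)) <= _).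
    by rewrite ler_wpM2l ?expR_ge0.
  rewrite -expRD -[X in _ <= X]lnK ?posrE ?divr_gt0 // ler_expR E3.
  rewrite /bound -/x -/L.
  have hxL : 0 <= (x - 1) * L by rewrite mulr_ge0 //; lra.
  move: hxL TE LE x3 x1 Lx x0; clearbody x L; move: (T%:R * eps R T) (ln delta) (ln (3:R)) => te ld l3.
  clear E3 P1; nra.
Qed.
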